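(* The basic coalgebra of a symmetric coalgebra is symmetric.
   Context: A coalgebra $C$ over a field $k$ is symmetric if there is an injective homomorphism of $C^*$-bimodules $C\to C^*$, where $C^*=\mathrm{Hom}_k(C,k)$ is the dual algebra acting on $C$ by the hit actions $f\rightharpoonup c=\sum c_{(1)}f(c_{(2)})$ and $c\leftharpoonup f=\sum f(c_{(1)})c_{(2)}$. The basic coalgebra of $C$ is $B=e\rightharpoonup C\leftharpoonup e$, where $e\in C^*$ is an idempotent such that the right comodule $C\leftharpoonup e$ is a direct sum of indecomposable injective right $C$-comodules containing each isomorphism class exactly once; its comultiplication is $x\mapsto\sum (e\rightharpoonup x_{(1)}\leftharpoonup e)\otimes(e\rightharpoonup x_{(2)}\leftharpoonup e)$ and its counit is the restriction of $\varepsilon$ (it is the coendomorphism coalgebra of $C\leftharpoonup e$). *)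

(* Defs.v *)
From Stdlib Require List.
From mathcomp Require Import all_boot all_algebra.
Set Implicit Arguments. Unset Strict Implicit. Unset Printing Implicit Defensive.
Import GRing.Theory.
Local Open Scope ring_scope.

(* Conventions:
   - An element of a tensor product M (x) N is represented by a finite list of
     pairs s = [(m_1,n_1);...], standing for sum_i m_i (x) n_i.  Two such lists
     represent the same tensor iff they agree on all f (x) g with f in M^*,
     g in N^* (this is the equality of M (x) N over a field).
   - A "space" may be a subspace S of an lmodType V given by a predicate;
     functionals on S are functions V -> k that are linear on S (their values
     outside S are irrelevant). *)

Section Coalg.
Variable k : fieldType.

Definition lin_on (V : lmodType k) (S : V -> Prop) (f : V -> k) :=
  forall a x y, S x -> S y -> f (a *: x + y) = a * f x + f y.

Definition lin (V : lmodType k) (f : V -> k) := lin_on (fun _ => True) f.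

Definition teq (M N : lmodType k) (s t : seq (M * N)) :=
  forall (f : M -> k) (g : N -> k), lin f -> lin g ->
    \sum_(p <- s) f p.1 * g p.2 = \sum_(p <- t) f p.1 * g p.2.

Definition is_coalgebra (C : lmodType k) (D : C -> seq (C * C)) (eps : C -> k) :=
  [/\ (forall a x y, teq (D (a *: x + y))
                        ([seq (a *: p.1, p.2) | p <- D x] ++ D y)),
      (forall c f g h, lin f -> lin g -> lin h ->
         \sum_(p <- D c) \sum_(q <- D p.1) f q.1 * g q.2 * h p.2
         = \sum_(p <- D c) \sum_(q <- D p.2) f p.1 * g q.1 * h q.2),
      lin eps,
      (forall c, \sum_(p <- D c) eps p.1 *: p.2 = c) &
      (forall c, \sum_(p <- D c) eps p.2 *: p.1 = c)].

(* hit actions: f -> c = sum c1 f(c2),  c <- f = sum f(c1) c2 *)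
Definition hitl (C : lmodType k) (D : C -> seq (C * C)) (f : C -> k) (c : C) : C :=
  \sum_(p <- D c) f p.2 *: p.1.
Definition hitr (C : lmodType k) (D : C -> seq (C * C)) (c : C) (f : C -> k) : C :=
  \sum_(p <- D c) f p.1 *: p.2.

(* A coalgebra structure (given by D) on the subspace S of V is symmetric:
   there is an injective S^*-bimodule map phi : S -> S^*.
   phi x y is the value of phi(x) at y; the convolution product of S^*
   is (f*g)(y) = sum f(y1) g(y2). *)
Definition symmetric_on (V : lmodType k) (S : V -> Prop) (D : V -> seq (V * V)) :=
  exists phi : V -> V -> k,
  [/\ (forall x, S x -> lin_on S (phi x)),
      (forall a x y z, S x -> S y -> S z ->
          phi (a *: x + y) z = a * phi x z + phi y z),
      (forall x x', S x -> S x' -> (forall y, S y -> phi x y = phi x' y) -> x = x'),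
      (forall f x y, lin_on S f -> S x -> S y ->
          phi (hitl D f x) y = \sum_(p <- D y) f p.1 * phi x p.2) &
      (forall f x y, lin_on S f -> S x -> S y ->
          phi (hitr D x f) y = \sum_(p <- D y) phi x p.1 * f p.2)].

Definition symmetric_coalg (C : lmodType k) (D : C -> seq (C * C)) :=
  symmetric_on (fun _ : C => True) D.

Section Comod.
Variables (C : lmodType k) (D : C -> seq (C * C)) (eps : C -> k).

Definition is_rcomodule (M : lmodType k) (rho : M -> seq (M * C)) :=
  [/\ (forall a x y, teq (rho (a *: x + y))
                        ([seq (a *: p.1, p.2) | p <- rho x] ++ rho y)),
      (forall m f g h, lin f -> lin g -> lin h ->
         \sum_(p <- rho m) \sum_(q <- rho p.1) f q.1 * g q.2 * h p.2
         = \sum_(p <- rho m) \sum_(q <- D p.2) f p.1 * g q.1 * h q.2) &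
      (forall m, \sum_(p <- rho m) eps p.2 *: p.1 = m)].

Definition comod_hom (M N : lmodType k) (rM : M -> seq (M * C)) (rN : N -> seq (N * C))
  (u : M -> N) :=
  (forall a x y, u (a *: x + y) = a *: u x + u y) /\
  (forall m, teq (rN (u m)) [seq (u p.1, p.2) | p <- rM m]).

Definition subcomod (M : lmodType k) (rho : M -> seq (M * C)) (Q : M -> Prop) :=
  [/\ Q 0, (forall a x y, Q x -> Q y -> Q (a *: x + y)) &
      (forall m, Q m -> exists s, List.Forall (fun p => Q p.1) s /\ teq s (rho m))].

Definition injective_sub (M : lmodType k) (rho : M -> seq (M * C)) (Q : M -> Prop) :=
  forall (X Y : lmodType k) (rX : X -> seq (X * C)) (rY : Y -> seq (Y * C)),
    is_rcomodule rX -> is_rcomodule rY ->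
    forall i : X -> Y, comod_hom rX rY i -> injective i ->
    forall u : X -> M, comod_hom rX rho u -> (forall x, Q (u x)) ->
    exists v : Y -> M, [/\ comod_hom rY rho v, (forall y, Q (v y)) &
                           forall x, v (i x) = u x].

Definition indecomposable_sub (M : lmodType k) (rho : M -> seq (M * C)) (Q : M -> Prop) :=
  (exists m, Q m /\ m <> 0) /\
  forall Q1 Q2, subcomod rho Q1 -> subcomod rho Q2 ->
    (forall m, Q m <-> exists m1 m2, [/\ Q1 m1, Q2 m2 & m = m1 + m2]) ->
    (forall m, Q1 m -> Q2 m -> m = 0) ->
    (forall m, Q1 m -> m = 0) \/ (forall m, Q2 m -> m = 0).

Definition iso_sub (X : lmodType k) (rX : X -> seq (X * C))
  (M : lmodType k) (rho : M -> seq (M * C)) (Q : M -> Prop) :=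
  exists u : X -> M, [/\ comod_hom rX rho u, injective u,
     (forall x, Q (u x)) & forall m, Q m -> exists x, u x = m].

(* e in C^* is an idempotent such that the right comodule C <- e is a direct
   sum of indecomposable injective right C-comodules containing each
   isomorphism class exactly once *)
Definition basic_idempotent (e : C -> k) :=
  [/\ lin e,
      (forall c, \sum_(p <- D c) e p.1 * e p.2 = e c) &
      exists (I : Type) (Q : I -> C -> Prop),
      [/\ (forall i, subcomod D (Q i) /\
                      forall x, Q i x -> exists c, x = hitr D c e),
          (forall x, (exists c, x = hitr D c e) ->
             exists s : seq (I * C),
               List.Forall (fun p => Q p.1 p.2) s /\ x = \sum_(p <- s) p.2),
          (forall i x (s : seq (I * C)), Q i x ->
             List.Forall (fun p => p.1 <> i /\ Q p.1 p.2) s ->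
             x = \sum_(p <- s) p.2 -> x = 0),
          (forall i, indecomposable_sub D (Q i) /\ injective_sub D (Q i)) &
          (forall (X : lmodType k) (rX : X -> seq (X * C)), is_rcomodule rX ->
             indecomposable_sub rX (fun _ => True) ->
             injective_sub rX (fun _ => True) ->
             exists i, iso_sub rX D (Q i) /\
                       forall j, iso_sub rX D (Q j) -> j = i)]].

(* the basic coalgebra B = e -> C <- e, as a subspace of C, with
   comultiplication x |-> sum (e -> x1 <- e) (x) (e -> x2 <- e) *)
Definition basic_sub (e : C -> k) (x : C) : Prop :=
  exists c, x = hitl D e (hitr D c e).
Definition basic_comul (e : C -> k) (x : C) : seq (C * C) :=
  [seq (hitl D e (hitr D p.1 e), hitl D e (hitr D p.2 e)) | p <- D x].

End Comod.
End Coalg.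

(* Main.v *)
Require Import Defs.
From mathcomp Require Import all_boot all_algebra.
From Stdlib Require Import FunctionalExtensionality.
Local Open Scope ring_scope.
Import GRing.Theory.
Set Implicit Arguments. Unset Strict Implicit.

Lemma lin0 (k : fieldType) (V : lmodType k) (f : V -> k) : lin f -> f 0 = 0.
Proof.
move=> H; have := H 1 0 0 I I; rewrite scale1r addr0 mul1r.
by move/(congr1 (fun z => z - f 0)); rewrite subrr addrK.
Qed.

Lemma linD (k : fieldType) (V : lmodType k) (f : V -> k) x y : lin f -> f (x + y) = f x + f y.
Proof. by move=> H; have := H 1 x y I I; rewrite scale1r mul1r. Qed.

Lemma linZ (k : fieldType) (V : lmodType k) (f : V -> k) a x : lin f -> f (a *: x) = a * f x.
Proof. by move=> H; have := H a x 0 I I; rewrite addr0 (lin0 H) addr0. Qed.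

Lemma lin_sum (k : fieldType) (V : lmodType k) (f : V -> k) (I : Type) (s : seq I) (F : I -> V) :
  lin f -> f (\sum_(i <- s) F i) = \sum_(i <- s) f (F i).
Proof.
move=> H; elim: s => [|x s IH]; first by rewrite !big_nil (lin0 H).
by rewrite !big_cons (linD _ _ H) IH.
Qed.

Definition conv (k : fieldType) (C : lmodType k) (D : C -> seq (C * C)) (f g : C -> k) (c : C) : k :=
  \sum_(p <- D c) f p.1 * g p.2.

Lemma conv_lin (k : fieldType) (C : lmodType k) (D : C -> seq (C * C)) eps f g :
  is_coalgebra D eps -> lin f -> lin g -> lin (conv D f g).
Proof.
case=> HD _ _ _ _ Hf Hg a x y _ _; rewrite /conv.
rewrite (HD a x y f g Hf Hg) big_cat big_map /= mulr_sumr; congr (_ + _).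
by apply: eq_bigr => p _; rewrite (linZ _ _ Hf) mulrA.
Qed.

Lemma convA (k : fieldType) (C : lmodType k) (D : C -> seq (C * C)) eps f g h :
  is_coalgebra D eps -> lin f -> lin g -> lin h ->
  conv D (conv D f g) h = conv D f (conv D g h).
Proof.
case=> _ HA _ _ _ Hf Hg Hh; apply: functional_extensionality => c; rewrite /conv.
have -> : \sum_(p <- D c) (\sum_(q <- D p.1) f q.1 * g q.2) * h p.2
  = \sum_(p <- D c) \sum_(q <- D p.1) f q.1 * g q.2 * h p.2.
  by apply: eq_bigr => p _; rewrite mulr_suml.
rewrite HA //; apply: eq_bigr => p _; rewrite mulr_sumr; apply: eq_bigr => q _.
by rewrite mulrA.
Qed.

Lemma lin_hitl (k : fieldType) (C : lmodType k) (D : C -> seq (C * C)) f g x :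
  lin g -> g (hitl D f x) = conv D g f x.
Proof.
move=> Hg; rewrite /hitl /conv (lin_sum _ _ Hg); apply: eq_bigr => p _.
by rewrite (linZ _ _ Hg) mulrC.
Qed.

Lemma lin_hitr (k : fieldType) (C : lmodType k) (D : C -> seq (C * C)) f g x :
  lin g -> g (hitr D x f) = conv D f g x.
Proof.
move=> Hg; rewrite /hitr /conv (lin_sum _ _ Hg); apply: eq_bigr => p _.
by rewrite (linZ _ _ Hg).
Qed.

Lemma conv_addl (k : fieldType) (C : lmodType k) (D : C -> seq (C * C)) a g1 g2 h c :
  conv D (fun z => a * g1 z + g2 z) h c = a * conv D g1 h c + conv D g2 h c.
Proof.
rewrite /conv mulr_sumr -big_split /=; apply: eq_bigr => p _.
by rewrite mulrDl mulrA.
Qed.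

Lemma conv_addr (k : fieldType) (C : lmodType k) (D : C -> seq (C * C)) a g1 g2 h c :
  conv D h (fun z => a * g1 z + g2 z) c = a * conv D h g1 c + conv D h g2 c.
Proof.
rewrite /conv mulr_sumr -big_split /=; apply: eq_bigr => p _.
by rewrite mulrDr mulrCA mulrA.
Qed.

Ltac lint H L := repeat first [ assumption | apply: (conv_lin H) | apply: L ].

Theorem lemma2p2p3 (k : fieldType) (C : lmodType k)
  (D : C -> seq (C * C)) (eps : C -> k) (e : C -> k) :
  is_coalgebra D eps ->
  symmetric_coalg D ->
  basic_idempotent D eps e ->
  symmetric_on (basic_sub D e) (basic_comul D e).
Proof.
move=> Hco [phi [Hlin1 Hphil Hinj Hl Hr]] [He Hee _].
have linphi : forall x, lin (phi x) by move=> x; exact: Hlin1 x I.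
have phiE : forall x x', (forall y, phi x y = phi x' y) -> x = x'.
  by move=> x x' H; apply: Hinj => // y _; exact: H.
have phil : forall f x, lin f -> phi (hitl D f x) = conv D f (phi x).
  by move=> f x Hf; apply: functional_extensionality => y; exact: Hl.
have phir : forall f x, lin f -> phi (hitr D x f) = conv D (phi x) f.
  by move=> f x Hf; apply: functional_extensionality => y; exact: Hr.
have phiD : forall a x y, phi (a *: x + y) = (fun z => a * phi x z + phi y z).
  by move=> a x y; apply: functional_extensionality => z; exact: Hphil.
have Hee' : conv D e e = e by apply: functional_extensionality => c; exact: Hee.
pose P := fun c => hitl D e (hitr D c e).
have phiP : forall c, phi (P c) = conv D e (conv D (phi c) e).
  by move=> c; rewrite /P phil // phir.
have gP : forall g, lin g -> forall z, g (P z) = conv D e (conv D g e) z.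
  move=> g Hg z; rewrite /P lin_hitl // lin_hitr //; lint Hco linphi.
have eL : forall g, lin g -> conv D e (conv D e (conv D g e)) = conv D e (conv D g e).
  by move=> g Hg; rewrite -(convA Hco) ?Hee' //; lint Hco linphi.
have eR : forall g, lin g -> conv D (conv D e (conv D g e)) e = conv D e (conv D g e).
  move=> g Hg; rewrite (convA Hco); try (lint Hco linphi).
  by rewrite (convA Hco) ?Hee' //; lint Hco linphi.
have eLR : forall g h, lin g -> h = conv D e (conv D g e) ->
    conv D e h = h /\ conv D h e = h.
  by move=> g h Hg ->; split; [exact: eL | exact: eR].
have hitrD : forall a x y, hitr D (a *: x + y) e = a *: hitr D x e + hitr D y e.
  move=> a x y; apply: phiE => z.
  rewrite Hphil //. by rewrite !phir // phiD conv_addl.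
have hitlD : forall a x y, hitl D e (a *: x + y) = a *: hitl D e x + hitl D e y.
  move=> a x y; apply: phiE => z.
  rewrite Hphil //. by rewrite !phil // phiD conv_addr.
have PD : forall a x y, P (a *: x + y) = a *: P x + P y.
  by move=> a x y; rewrite /P hitrD hitlD.
have P0 : P 0 = 0.
  have := PD 1 0 0; rewrite !scale1r addr0.
  by move/(congr1 (fun v => v - P 0)); rewrite subrr addrK.
have Psum : forall (s : seq (C * C)) (F : C * C -> k) (G : C * C -> C),
    P (\sum_(p <- s) F p *: G p) = \sum_(p <- s) F p *: P (G p).
  move=> s F G; elim: s => [|q s IH]; first by rewrite !big_nil.
  by rewrite !big_cons PD IH.
have PP : forall z, P (P z) = P z.
  by move=> z; apply: phiE => w; rewrite !phiP eR // eL.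
have fixP : forall c z, phi (P c) (P z) = phi (P c) z.
  by move=> c z; rewrite gP // !phiP eR // eL.
have Hf' : forall f, lin_on (basic_sub D e) f -> lin (fun z => f (P z)).
  by move=> f Hf a x y _ _; rewrite PD Hf //; [exists x | exists y].
have f'E : forall f, lin_on (basic_sub D e) f ->
    (fun z => f (P z)) = conv D e (conv D (fun z => f (P z)) e).
  move=> f Hf; apply: functional_extensionality => z.
  by rewrite -gP ?PP //; exact: Hf'.
exists phi; split.
- by move=> x _ a y z _ _; exact: linphi.
- by move=> a x y z _ _ _; exact: Hphil.
- move=> x x' [c ->] [c' ->] H; apply: phiE => z.
  by rewrite -(fixP c) -(fixP c') H //; exists z.
- move=> f x y Hf [c ->] _.
  have hB : hitl (basic_comul D e) f (P c) = P (hitl D (fun z => f (P z)) (P c)).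
    by rewrite /hitl big_map Psum.
  rewrite hB phiP phil //; last exact: Hf'. rewrite /basic_comul big_map /=.
  under eq_bigr => j _ do rewrite (fixP c j.2).
  change (conv D e (conv D (conv D (fun z => f (P z)) (phi (P c))) e) y
    = conv D (fun z => f (P z)) (phi (P c)) y).
  have [FL FR] := eLR _ _ (Hf' f Hf) (f'E f Hf).
  have [GL GR] := eLR _ _ (linphi c) (phiP c).
  have HF := Hf' f Hf.
  rewrite (convA Hco) ?GR -?(convA Hco) ?FL //; lint Hco linphi.
- move=> f x y Hf [c ->] _.
  have hB : hitr (basic_comul D e) (P c) f = P (hitr D (P c) (fun z => f (P z))).
    by rewrite /hitr big_map Psum.
  have HF := Hf' f Hf.
  rewrite hB phiP phir // /basic_comul big_map /=.
  under eq_bigr => j _ do rewrite (fixP c j.1).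
  change (conv D e (conv D (conv D (phi (P c)) (fun z => f (P z))) e) y
    = conv D (phi (P c)) (fun z => f (P z)) y).
  have [FL FR] := eLR _ _ (Hf' f Hf) (f'E f Hf).
  have [GL GR] := eLR _ _ (linphi c) (phiP c).
  rewrite (convA Hco); try (lint Hco linphi).
  rewrite FR -(convA Hco); try (lint Hco linphi).
  by rewrite GL.
Qed.
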